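(* Let $A,B:(0,\infty)\to(0,\infty)$ be the functions $A=\tfrac r3\sqrt{1-r^{-3}}$, $B=\tfrac r{\sqrt3}$, where $r=r(t)\in(1,\infty)$ is determined by $\dot A=\tfrac12(1-A^2/B^2)$, $\dot B=A/B$ with $r\to1$ as $t\to0$. For the ODE system $$\dot f_+=\frac{f_+}{A}\Bigl(1-\frac{A^2}{B^2}-f_+\Bigr)+f_-^2\frac{A}{B^2},\qquad \dot f_-=\frac{2f_-}{A}(f_+-1),$$ the following subsets of $\mathbb{R}^2$ are forward-invariant (for $t>0$): (i) $H_\pm=\{(f_+,f_-):\pm f_->0\}$; (ii) $\mathcal{R}_\infty=\{(f_+,f_-): f_+>1,\ f_->1\}$; (iii) $\mathcal{R}_0=\{(f_+,f_-):\tfrac23<f_+<1,\ 0<f_-<1\}$.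
   Context: $A$ and $B$ are the metric coefficients of the Bryant–Salamon $G_2$-metric $dt^2+A^2\sum(e_i^+)^2+B^2\sum(e_i^-)^2$ on $\mathbf{S}(S^3)$, and the system is the $\mathrm{SU}(2)^3$-invariant $G_2$-instanton equation for $\mathrm{SU}(2)$-connections $f_+\sum_iE_i\otimes e_i^++f_-\sum_iE_i\otimes e_i^-$. *)

(* Defs.v *)
From Stdlib Require Import Reals.
From Coquelicot Require Import Coquelicot.
Open Scope R_scope.

Definition coefA (r : R -> R) (t : R) : R := r t / 3 * sqrt (1 - / (r t ^ 3)).
Definition coefB (r : R -> R) (t : R) : R := r t / sqrt 3.

Definition rhs_plus (r : R -> R) (t fp fm : R) : R :=
  fp / coefA r t * (1 - coefA r t ^ 2 / coefB r t ^ 2 - fp)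
  + fm ^ 2 * (coefA r t / coefB r t ^ 2).
Definition rhs_minus (r : R -> R) (t fp fm : R) : R :=
  2 * fm / coefA r t * (fp - 1).

Definition is_solution_on (r : R -> R) (fp fm : R -> R) (t0 t1 : R) : Prop :=
  forall t, t0 <= t <= t1 ->
    is_derive fp t (rhs_plus r t (fp t) (fm t)) /\
    is_derive fm t (rhs_minus r t (fp t) (fm t)).

Definition fwd_invariant (r : R -> R) (S : R -> R -> Prop) : Prop :=
  forall (fp fm : R -> R) (t0 t1 : R),
    0 < t0 -> t0 <= t1 ->
    is_solution_on r fp fm t0 t1 ->
    S (fp t0) (fm t0) -> S (fp t1) (fm t1).

Definition H_plus (x y : R) : Prop := 0 < y.
Definition H_minus (x y : R) : Prop := y < 0.
Definition R_infty (x y : R) : Prop := 1 < x /\ 1 < y.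
Definition R_zero (x y : R) : Prop := 2 / 3 < x < 1 /\ 0 < y < 1.

(* Main.v *)
Require Import Defs.
From Stdlib Require Import Reals Lra Psatz Classical.
From Coquelicot Require Import Coquelicot.
Open Scope R_scope.

Lemma der_cont f t l : is_derive f t l -> continuity_pt f t.
Proof. intro H. apply derivable_continuous_pt. apply is_derive_Reals in H. exists l; exact H. Qed.

Lemma real_ind (Q : R -> Prop) t0 t1 : t0 <= t1 -> Q t0 ->
  (forall t, t0 <= t < t1 -> Q t -> exists d, 0 < d /\ forall u, t <= u < t + d -> Q u) ->
  (forall s, t0 < s <= t1 -> (forall u, t0 <= u < s -> Q u) -> Q s) ->
  Q t1.
Proof.
  intros Hle H0 Hop Hcl.
  set (E := fun x => t0 <= x <= t1 /\ forall u, t0 <= u <= x -> Q u).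
  assert (HB : bound E) by (exists t1; intros x [Hx _]; lra).
  assert (HE : exists x, E x) by (exists t0; split; [lra| intros u Hu; replace u with t0 by lra; auto]).
  destruct (completeness E HB HE) as [s [Hub Hlub]].
  assert (Hs0 : t0 <= s) by (apply Hub; destruct HE; unfold E; split; [lra| intros u Hu; replace u with t0 by lra; auto]).
  assert (Hs1 : s <= t1) by (apply Hlub; intros x [Hx _]; lra).
  assert (Hbel : forall u, t0 <= u < s -> Q u).
  { intros u Hu. destruct (Rle_dec s u) as [Hc|Hc]; [lra|].
    assert (~ is_upper_bound E u) as Hn.
    { intro Hu'. specialize (Hlub u Hu'). lra. }
    apply not_all_ex_not in Hn. destruct Hn as [x Hx].
    apply Classical_Prop.imply_to_and in Hx. destruct Hx as [[Hx1 Hx2] Hx3].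
    apply Hx2. lra. }
  assert (HQs : Q s).
  { destruct (Req_dec s t0) as [e|n]. subst s; auto. apply Hcl; [lra|auto]. }
  destruct (Req_dec s t1) as [e|n]. subst s; auto.
  assert (Hlt : s < t1) by (destruct (Rle_lt_or_eq_dec _ _ Hs1); [auto|contradiction]).
  exfalso. destruct (Hop s (conj Hs0 Hlt) HQs) as [d [Hd Hd']].
  assert (E (Rmin (s + d/2) t1)).
  { split. split; [apply Rmin_glb; lra | apply Rmin_r].
    intros u Hu. destruct (Rle_dec u s). destruct (Req_dec u s). subst; auto. apply Hbel; lra.
    apply Hd'. split. lra. assert (Rmin (s+d/2) t1 <= s + d/2) by apply Rmin_l. lra. }
  specialize (Hub _ H). unfold Rmin in Hub. destruct (Rle_dec (s + d/2) t1); lra.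
Qed.

Lemma cont_lower f t0 s c : t0 < s -> continuity_pt f s -> (forall u, t0 <= u < s -> c < f u) -> c <= f s.
Proof.
  intros Hs Hc Hu. destruct (Rle_dec c (f s)) as [h|h]; auto. exfalso.
  destruct (Hc (c - f s)) as [d [Hd Hd']]; [lra|].
  set (u := Rmax t0 (s - d/2)).
  assert (Hu1 : t0 <= u) by apply Rmax_l.
  assert (Hu2 : u < s /\ s - u < d) by (unfold u, Rmax; destruct (Rle_dec t0 (s - d/2)); lra).
  specialize (Hd' u). simpl in Hd'. unfold R_dist, D_x, no_cond in Hd'.
  assert (Rabs (f u - f s) < c - f s).
  { apply Hd'. split. split; auto. lra. rewrite Rabs_left; lra. }
  specialize (Hu u (conj Hu1 (proj1 Hu2))). rewrite Rabs_right in H; lra.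
Qed.

Lemma cont_upper f t0 s c : t0 < s -> continuity_pt f s -> (forall u, t0 <= u < s -> f u < c) -> f s <= c.
Proof.
  intros Hs Hc Hu. assert (- c <= - f s); [|lra].
  apply (cont_lower (fun x => - f x) t0 s); auto.
  apply continuity_pt_opp; auto. intros u h; specialize (Hu u h); lra.
Qed.

Lemma open_gt f t c : continuity_pt f t -> c < f t -> exists d, 0 < d /\ forall u, t <= u < t + d -> c < f u.
Proof.
  intros Hc Hf. destruct (Hc (f t - c)) as [d [Hd Hd']]; [lra|].
  exists d; split; auto. intros u Hu. destruct (Req_dec u t). subst; auto.
  assert (Rabs (f u - f t) < f t - c). apply Hd'. simpl; unfold D_x, no_cond, R_dist. split. split; auto.
  rewrite Rabs_right; lra.
  apply Rabs_def2 in H0. lra.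
Qed.

Lemma open_lt f t c : continuity_pt f t -> f t < c -> exists d, 0 < d /\ forall u, t <= u < t + d -> f u < c.
Proof.
  intros Hc Hf. destruct (open_gt (fun x => - f x) t (-c)) as [d [Hd Hd']].
  apply continuity_pt_opp; auto. lra. exists d; split; auto. intros u h; specialize (Hd' u h); simpl in Hd'; lra.
Qed.

Lemma deriv_pos_contra f t0 s l : t0 < s -> is_derive f s l -> 0 < l -> (forall u, t0 <= u < s -> f s < f u) -> False.
Proof.
  intros Hs Hd Hl Hu. apply is_derive_Reals in Hd.
  destruct (Hd l Hl) as [d Hd'].
  set (h := - Rmin (d/2) (s - t0)).
  assert (Hh : 0 < Rmin (d/2) (s - t0)) by (apply Rmin_glb_lt; destruct d; simpl; lra).
  assert (Hh2 : Rmin (d/2) (s-t0) <= d/2) by apply Rmin_l.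
  assert (Hh3 : Rmin (d/2) (s-t0) <= s - t0) by apply Rmin_r.
  assert (d > 0) by (destruct d; simpl; lra).
  specialize (Hd' h). assert (h <> 0) by (unfold h; lra).
  assert (Rabs h < d) by (unfold h; rewrite Rabs_left; lra).
  specialize (Hd' H0 H1). specialize (Hu (s + h)). assert (f s < f (s + h)) by (apply Hu; unfold h; lra).
  apply Rabs_def2 in Hd'. destruct Hd' as [_ Hd'].
  assert (/h < 0) by (apply Rinv_lt_0_compat; unfold h; lra).
  unfold Rdiv in Hd'. nra.
Qed.

Lemma mono f df a b : a <= b -> (forall x, a<=x<=b -> is_derive f x (df x)) ->
  (forall x, a<=x<=b -> 0 <= df x) -> f a <= f b.
Proof.
  intros Hab Hd Hp.
  destruct (MVT_gen f a b df) as [c [Hc Heq]].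
  - intros x Hx. rewrite Rmin_left, Rmax_right in Hx by lra. apply Hd; lra.
  - intros x Hx. rewrite Rmin_left, Rmax_right in Hx by lra. eapply der_cont; apply Hd; lra.
  - rewrite Rmin_left, Rmax_right in Hc by lra. specialize (Hp c Hc). nra.
Qed.

Lemma coef_facts r t : 1 < r t ->
  0 < coefA r t /\ 0 < coefB r t /\ coefA r t ^ 2 / coefB r t ^ 2 < 1/3.
Proof.
  intro Hr. unfold coefA, coefB.
  assert (H3 : 1 < r t ^ 3) by (simpl; nra).
  assert (Hi : 0 < / r t ^ 3 < 1) by (split; [apply Rinv_0_lt_compat; lra| rewrite <- Rinv_1; apply Rinv_lt_contravar; lra]).
  assert (Hs : 0 < sqrt (1 - / r t ^ 3)) by (apply sqrt_lt_R0; lra).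
  assert (Hs3 : 0 < sqrt 3) by (apply sqrt_lt_R0; lra).
  assert (Hss : sqrt (1 - / r t ^ 3) * sqrt (1 - / r t ^ 3) = 1 - / r t ^ 3) by (apply sqrt_sqrt; lra).
  assert (Hss3 : sqrt 3 * sqrt 3 = 3) by (apply sqrt_sqrt; lra).
  split; [|split].
  - apply Rmult_lt_0_compat; [apply Rdiv_lt_0_compat|]; lra.
  - apply Rdiv_lt_0_compat; lra.
  - replace ((r t / 3 * sqrt (1 - / r t ^ 3)) ^ 2 / (r t / sqrt 3) ^ 2) with
      ((sqrt (1 - / r t ^ 3) * sqrt (1 - / r t ^ 3)) * (sqrt 3 * sqrt 3) / 9) by (field; lra).
    rewrite Hss, Hss3. lra.
Qed.

Lemma Hplus_inv r : (forall t, 0 < t -> 1 < r t) ->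
  (forall t, 0 < t -> continuity_pt (coefA r) t) -> fwd_invariant r H_plus.
Proof.
  intros Hr HAc fp fm t0 t1 Ht0 Hle Hsol Hfm0. unfold H_plus in *.
  assert (HA : forall t, t0 <= t -> 0 < coefA r t) by (intros t Ht; apply (coef_facts r t), Hr; lra).
  assert (Hcp : forall t, t0 <= t <= t1 -> continuity_pt fp t) by (intros t Ht; eapply der_cont; apply (Hsol t Ht)).
  assert (Hcm : forall t, t0 <= t <= t1 -> continuity_pt fm t) by (intros t Ht; eapply der_cont; apply (Hsol t Ht)).
  set (c := fun t => 2 * (fp t - 1) / coefA r t).
  destruct (continuity_ab_maj (fun t => - c t) t0 t1 Hle) as [Mx [HM _]].
  { intros x Hx. apply (continuity_pt_opp c). unfold c.
    apply (continuity_pt_div (fun t => 2 * (fp t - 1)) (coefA r)).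
    apply (continuity_pt_mult (fun _ => 2) (fun t => fp t - 1)). apply continuity_pt_const; intros a b; auto.
    apply (continuity_pt_minus fp (fun _ => 1)). auto. apply continuity_pt_const; intros a b; auto.
    apply HAc; lra. specialize (HA x); lra. }
  set (M0 := - c Mx).
  apply (real_ind (fun t => 0 < fm t) t0 t1); auto.
  - intros t Ht Hq. apply open_gt; auto. apply Hcm; lra.
  - intros s Hs Hb.
    assert (Hge : forall u, t0 <= u <= s -> 0 <= fm u).
    { intros u Hu. destruct (Req_dec u s). subst. apply (cont_lower fm t0 s); auto; try lra. apply Hcm; lra.
      left; apply Hb; lra. }
    set (g := fun t => fm t * exp (M0 * (t - t0))).
    assert (Hg : g t0 <= g s).
    { apply (mono g (fun t => fm t * (c t + M0) * exp (M0 * (t - t0)))). lra.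
      - intros x Hx. unfold g.
        assert (He : is_derive (fun t => exp (M0 * (t - t0))) x (M0 * exp (M0 * (x - t0)))).
        { auto_derive. auto. rewrite Rmult_1_r; reflexivity. }
        destruct (Hsol x ltac:(lra)) as [_ Hd].
        replace (fm x * (c x + M0) * exp (M0 * (x - t0))) with (rhs_minus r x (fp x) (fm x) * exp (M0 * (x - t0)) + fm x * (M0 * exp (M0 * (x - t0)))).
        apply (is_derive_mult fm (fun t => exp (M0 * (t - t0)))); auto. intros; apply Rmult_comm.
        unfold rhs_minus, c. field. specialize (HA x); lra.
      - intros x Hx. specialize (HM x ltac:(lra)). specialize (Hge x Hx).
        assert (0 <= c x + M0) by (unfold M0; lra).
        assert (0 < exp (M0 * (x - t0))) by apply exp_pos. apply Rmult_le_pos; [apply Rmult_le_pos|]; lra. }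
    unfold g in Hg. replace (t0 - t0) with 0 in Hg by ring. rewrite Rmult_0_r, exp_0, Rmult_1_r in Hg.
    assert (0 < exp (M0 * (s - t0))) by apply exp_pos. nra.
Qed.

Lemma Hminus_inv r : fwd_invariant r H_plus -> fwd_invariant r H_minus.
Proof.
  intros HP fp fm t0 t1 Ht0 Hle Hsol Hm. unfold H_minus in *.
  assert (0 < - fm t1); [|lra].
  apply (HP fp (fun t => - fm t) t0 t1 Ht0 Hle); [|unfold H_plus; lra].
  intros t Ht. destruct (Hsol t Ht) as [Hp Hmm]. split.
  - replace (rhs_plus r t (fp t) (- fm t)) with (rhs_plus r t (fp t) (fm t)) by (unfold rhs_plus; ring). auto.
  - replace (rhs_minus r t (fp t) (- fm t)) with (opp (rhs_minus r t (fp t) (fm t))) by (unfold rhs_minus, opp; simpl; unfold Rdiv; ring).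
    apply (is_derive_opp fm). auto.
Qed.

Lemma open2 (P1 P2 : R -> Prop) t :
  (exists d, 0 < d /\ forall u, t <= u < t + d -> P1 u) ->
  (exists d, 0 < d /\ forall u, t <= u < t + d -> P2 u) ->
  exists d, 0 < d /\ forall u, t <= u < t + d -> P1 u /\ P2 u.
Proof.
  intros [d1 [H1 H1']] [d2 [H2 H2']]. exists (Rmin d1 d2). split. apply Rmin_glb_lt; auto.
  intros u Hu. assert (Rmin d1 d2 <= d1) by apply Rmin_l. assert (Rmin d1 d2 <= d2) by apply Rmin_r.
  split; [apply H1'|apply H2']; lra.
Qed.

Lemma deriv_neg_contra f t0 s l : t0 < s -> is_derive f s l -> l < 0 -> (forall u, t0 <= u < s -> f u < f s) -> False.
Proof.
  intros Hs Hd Hl Hu. apply (deriv_pos_contra (fun x => - f x) t0 s (- l)); auto; [|lra|].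
  apply (is_derive_opp f s l Hd). intros u h; specialize (Hu u h); lra.
Qed.

Lemma Rinf_inv r : (forall t, 0 < t -> 1 < r t) -> fwd_invariant r R_infty.
Proof.
  intros Hr fp fm t0 t1 Ht0 Hle Hsol [Hp0 Hm0]. unfold R_infty in *.
  assert (HF : forall t, t0 <= t -> 0 < coefA r t /\ 0 < coefB r t /\ coefA r t ^ 2 / coefB r t ^ 2 < 1/3) by (intros t Ht; apply coef_facts, Hr; lra).
  assert (Hcp : forall t, t0 <= t <= t1 -> continuity_pt fp t) by (intros t Ht; eapply der_cont; apply (Hsol t Ht)).
  assert (Hcm : forall t, t0 <= t <= t1 -> continuity_pt fm t) by (intros t Ht; eapply der_cont; apply (Hsol t Ht)).
  apply (real_ind (fun t => 1 < fp t /\ 1 < fm t) t0 t1); auto.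
  - intros t Ht [Hq1 Hq2]. apply open2; apply open_gt; auto; [apply Hcp|apply Hcm]; lra.
  - intros s Hs Hb.
    assert (Hcl : forall u, t0 <= u <= s -> 1 <= fp u /\ 1 <= fm u).
    { intros u Hu. destruct (Req_dec u s). subst. split.
      apply (cont_lower fp t0 s); try lra. apply Hcp; lra. intros v Hv; apply Hb; auto.
      apply (cont_lower fm t0 s); try lra. apply Hcm; lra. intros v Hv; apply Hb; auto.
      destruct (Hb u ltac:(lra)); lra. }
    assert (Hmono : fm t0 <= fm s).
    { apply (mono fm (fun x => rhs_minus r x (fp x) (fm x))). lra.
      intros x Hx; apply Hsol; lra.
      intros x Hx. destruct (Hcl x Hx). destruct (HF x ltac:(lra)) as [HA _].
      assert (0 < / coefA r x) by (apply Rinv_0_lt_compat; lra).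
      unfold rhs_minus, Rdiv. repeat apply Rmult_le_pos; lra. }
    destruct (Hcl s ltac:(lra)) as [Hps Hms].
    split; [|lra].
    destruct (Rle_lt_or_eq_dec _ _ Hps) as [h|h]; auto. exfalso.
    destruct (HF s ltac:(lra)) as [HA [HB _]].
    apply (deriv_pos_contra fp t0 s (rhs_plus r s (fp s) (fm s))); try lra.
    + apply Hsol; lra.
    + unfold rhs_plus. rewrite <- h.
      replace (1 / coefA r s * (1 - coefA r s ^ 2 / coefB r s ^ 2 - 1) + fm s ^ 2 * (coefA r s / coefB r s ^ 2))
        with ((fm s ^ 2 - 1) * (coefA r s / coefB r s ^ 2)) by (field; lra).
      apply Rmult_lt_0_compat. nra. apply Rdiv_lt_0_compat; [lra| apply pow_lt; lra].
    + intros u Hu. rewrite <- h. apply Hb; auto.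
Qed.

Lemma R0_inv r : (forall t, 0 < t -> 1 < r t) -> fwd_invariant r H_plus -> fwd_invariant r R_zero.
Proof.
  intros Hr HP fp fm t0 t1 Ht0 Hle Hsol H0. unfold R_zero in *.
  assert (HF : forall t, t0 <= t -> 0 < coefA r t /\ 0 < coefB r t /\ coefA r t ^ 2 / coefB r t ^ 2 < 1/3) by (intros t Ht; apply coef_facts, Hr; lra).
  assert (Hcp : forall t, t0 <= t <= t1 -> continuity_pt fp t) by (intros t Ht; eapply der_cont; apply (Hsol t Ht)).
  assert (Hcm : forall t, t0 <= t <= t1 -> continuity_pt fm t) by (intros t Ht; eapply der_cont; apply (Hsol t Ht)).
  apply (real_ind (fun t => (2/3 < fp t < 1) /\ (0 < fm t < 1)) t0 t1); auto.
  - intros t Ht [[Hq1 Hq2] [Hq3 Hq4]].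
    assert (t0 <= t <= t1) by lra.
    apply open2; apply open2; first [apply open_gt | apply open_lt]; auto.
  - intros s Hs Hb.
    assert (Hcl : forall u, t0 <= u <= s -> (2/3 <= fp u <= 1) /\ (0 <= fm u <= 1)).
    { intros u Hu. destruct (Req_dec u s). subst.
      assert (continuity_pt fp s) by (apply Hcp; lra).
      assert (continuity_pt fm s) by (apply Hcm; lra).
      split; split.
      apply (cont_lower fp t0 s); try lra; auto. intros v Hv; apply Hb; auto.
      apply (cont_upper fp t0 s); try lra; auto. intros v Hv; apply Hb; auto.
      apply (cont_lower fm t0 s); try lra; auto. intros v Hv; apply Hb; auto.
      apply (cont_upper fm t0 s); try lra; auto. intros v Hv; apply Hb; auto.
      destruct (Hb u ltac:(lra)) as [[? ?] [? ?]]; lra. }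
    assert (Hpos : 0 < fm s).
    { apply (HP fp fm t0 s Ht0 ltac:(lra)). intros t Ht; apply Hsol; lra. unfold H_plus; lra. }
    assert (Hmono : - fm t0 <= - fm s).
    { apply (mono (fun x => - fm x) (fun x => - rhs_minus r x (fp x) (fm x))). lra.
      intros x Hx. apply (is_derive_opp fm). apply Hsol; lra.
      intros x Hx. destruct (Hcl x Hx) as [[? ?] [? ?]]. destruct (HF x ltac:(lra)) as [HA _].
      assert (0 < / coefA r x) by (apply Rinv_0_lt_compat; lra).
      unfold rhs_minus, Rdiv.
      assert (0 <= 2 * fm x * / coefA r x * (1 - fp x)) by (repeat apply Rmult_le_pos; lra). nra. }
    destruct (Hcl s ltac:(lra)) as [[Hps1 Hps2] [Hms1 Hms2]].
    destruct (HF s ltac:(lra)) as [HA [HB Hk]].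
    split; [|lra]. split.
    + destruct (Rle_lt_or_eq_dec _ _ Hps1) as [h|h]; auto. exfalso.
      apply (deriv_pos_contra fp t0 s (rhs_plus r s (fp s) (fm s))); try lra.
      * apply Hsol; lra.
      * unfold rhs_plus. rewrite <- h.
        assert (0 < 2/3 / coefA r s * (1 - coefA r s ^ 2 / coefB r s ^ 2 - 2/3)).
        { apply Rmult_lt_0_compat. apply Rdiv_lt_0_compat; lra. lra. }
        assert (0 <= fm s ^ 2 * (coefA r s / coefB r s ^ 2)).
        { apply Rmult_le_pos. nra. left; apply Rdiv_lt_0_compat; [lra| apply pow_lt; lra]. }
        lra.
      * intros u Hu. rewrite <- h. apply Hb; auto.
    + destruct (Rle_lt_or_eq_dec _ _ Hps2) as [h|h]; auto. exfalso.
      apply (deriv_neg_contra fp t0 s (rhs_plus r s (fp s) (fm s))); try lra.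
      * apply Hsol; lra.
      * unfold rhs_plus. rewrite h.
        replace (1 / coefA r s * (1 - coefA r s ^ 2 / coefB r s ^ 2 - 1) + fm s ^ 2 * (coefA r s / coefB r s ^ 2))
          with ((fm s ^ 2 - 1) * (coefA r s / coefB r s ^ 2)) by (field; lra).
        assert (0 < coefA r s / coefB r s ^ 2) by (apply Rdiv_lt_0_compat; [lra| apply pow_lt; lra]).
        assert (fm s ^ 2 - 1 < 0) by nra. nra.
      * intros u Hu. rewrite h. apply Hb; auto.
Qed.

Theorem mainTheorem3 (r : R -> R) :
  (forall t, 0 < t -> 1 < r t) ->
  filterlim r (at_right 0) (locally 1) ->
  (forall t, 0 < t ->
     is_derive (coefA r) t (1 / 2 * (1 - coefA r t ^ 2 / coefB r t ^ 2))) ->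
  (forall t, 0 < t -> is_derive (coefB r) t (coefA r t / coefB r t)) ->
  fwd_invariant r H_plus /\ fwd_invariant r H_minus /\
  fwd_invariant r R_infty /\ fwd_invariant r R_zero.
Proof.
  intros Hr _ HAd _.
  assert (HP : fwd_invariant r H_plus).
  { apply Hplus_inv; auto. intros t Ht. eapply der_cont; apply HAd; auto. }
  split; [auto|split; [apply Hminus_inv; auto|split; [apply Rinf_inv; auto| apply R0_inv; auto]]].
Qed.
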